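(* Let $(S,\mathcal{S})$ be a measurable space and let $\mathcal{E}\subseteq\mathcal{P}(S)$ be a $\cap$-stable collection with $\sigma(\mathcal{E})=\mathcal{S}$, $\emptyset\in\mathcal{E}$ and $\mathcal{E}\subseteq (\mathcal{E}_{int})_{\sigma}$. If $\pi$ is a constructive cr-set, then for every $A\in\mathcal{S}$ there exist $K\in (\mathcal{E}_{int})_{\sigma}$ and $L\in(\mathcal{E}_{ext})_{\delta}$ with $K\subseteq A\subseteq L$ and $T_{\pi}(L\setminus K)=0$.
   Context: $(\Omega,\mathcal{F},P)$ is a probability space; $C(S)$ is the set of countable subsets of $S$; $N_A(M)=|A\cap M|$; $\mathcal{C}(\mathcal{S})=\sigma(N_A\mid A\in\mathcal{S})$; a cr-set is an $\mathcal{F}$-$\mathcal{C}(\mathcal{S})$ measurable map $\pi:\Omega\to C(S)$, finite if its values are finite; a map $\tau:\Omega\to C(S)$ is constructive if $\tau(\omega)=\bigcup_k\pi_k(\omega)$ for all $\omega$ for some finite cr-sets $\pi_k$, $k\in\mathbb{N}$. The hitting function is $T_\pi(A)=P(\pi\cap A\neq\emptyset)$, $A\in\mathcal{S}$. For a nonempty family $\mathcal{E}$: $\mathcal{E}_\sigma$ (resp. $\mathcal{E}_\delta$) is the family of countable unions (resp. intersections) of $\mathcal{E}$-sets, the empty union/intersection not included; $\mathcal{E}_{ext}=\mathcal{E}_\sigma$; $\mathcal{E}_{int}=\{\bigcap_n (S\setminus E_n)\mid E_n\in\mathcal{E}\}$. *)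

(* Defs.v *)
From Stdlib Require Import Reals List.
Open Scope R_scope.

Definition set (X : Type) := X -> Prop.

Definition setT {X : Type} : set X := fun _ => True.
Definition setI {X : Type} (A B : set X) : set X := fun x => A x /\ B x.
Definition setD {X : Type} (A B : set X) : set X := fun x => A x /\ ~ B x.
Definition subset {X : Type} (A B : set X) : Prop := forall x, A x -> B x.

Definition sigma_algebra {X : Type} (G : set (set X)) : Prop :=
  G setT /\
  (forall A, G A -> G (fun x => ~ A x)) /\
  (forall A : nat -> set X, (forall n, G (A n)) -> G (fun x => exists n, A n x)).

Definition sigma_gen {X : Type} (E : set (set X)) : set (set X) :=
  fun A => forall G, sigma_algebra G -> (forall B, E B -> G B) -> G A.

Definition is_probability {Om : Type} (F : set (set Om)) (P : set Om -> R) : Prop :=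
  sigma_algebra F /\
  (forall A, F A -> 0 <= P A) /\
  P setT = 1 /\
  (forall B : nat -> set Om, (forall n, F (B n)) ->
     (forall m n, m <> n -> forall x, B m x -> B n x -> False) ->
     infinite_sum (fun n => P (B n)) (P (fun x => exists n, B n x))).

Definition countable_set {X : Type} (M : set X) : Prop :=
  exists f : X -> nat, forall x y, M x -> M y -> f x = f y -> x = y.

Definition finite_set {X : Type} (M : set X) : Prop :=
  exists l : list X, forall x, M x <-> In x l.

Definition CS (X : Type) := { M : set X | countable_set M }.

(* cardinality |D| in {0,1,...} U {oo}; None encodes oo *)
Definition card_ge {X : Type} (D : set X) (n : nat) : Prop :=
  exists l : list X, NoDup l /\ length l = n /\ forall x, In x l -> D x.

Definition Ncard {X : Type} (D : set X) (k : option nat) : Prop :=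
  match k with
  | None => forall n, card_ge D n
  | Some n => card_ge D n /\ ~ card_ge D (Datatypes.S n)
  end.

(* generators of C(S) = sigma(N_A | A in SS): preimages N_A^{-1}(B),
   B an arbitrary subset of {0,1,...,oo} (discrete sigma-algebra) *)
Definition CS_gens {X : Type} (SS : set (set X)) : set (set (CS X)) :=
  fun B => exists A, SS A /\ exists K : set (option nat),
    forall M : CS X, B M <-> exists k, Ncard (setI A (proj1_sig M)) k /\ K k.

Definition CS_alg {X : Type} (SS : set (set X)) : set (set (CS X)) :=
  sigma_gen (CS_gens SS).

Definition is_cr_set {Om X : Type} (F : set (set Om)) (SS : set (set X))
  (pi : Om -> CS X) : Prop :=
  forall B, CS_alg SS B -> F (fun w => B (pi w)).

Definition is_finite_cr_set {Om X : Type} (F : set (set Om)) (SS : set (set X))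
  (pi : Om -> CS X) : Prop :=
  is_cr_set F SS pi /\ forall w, finite_set (proj1_sig (pi w)).

Definition constructive {Om X : Type} (F : set (set Om)) (SS : set (set X))
  (tau : Om -> CS X) : Prop :=
  exists pik : nat -> Om -> CS X,
    (forall k, is_finite_cr_set F SS (pik k)) /\
    forall w x, proj1_sig (tau w) x <-> exists k, proj1_sig (pik k w) x.

Definition hitting {Om X : Type} (P : set Om -> R) (pi : Om -> CS X) (A : set X) : R :=
  P (fun w => exists x, proj1_sig (pi w) x /\ A x).

(* E_sigma, E_delta (countable, nonempty families: nat-indexed sequences) *)
Definition fam_sigma {X : Type} (E : set (set X)) : set (set X) :=
  fun A => exists f : nat -> set X, (forall n, E (f n)) /\
    forall x, A x <-> exists n, f n x.

Definition fam_delta {X : Type} (E : set (set X)) : set (set X) :=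
  fun A => exists f : nat -> set X, (forall n, E (f n)) /\
    forall x, A x <-> forall n, f n x.

Definition fam_ext {X : Type} (E : set (set X)) : set (set X) := fam_sigma E.

Definition fam_int {X : Type} (E : set (set X)) : set (set X) :=
  fun A => exists f : nat -> set X, (forall n, E (f n)) /\
    forall x, A x <-> forall n, ~ f n x.

(* Main.v *)
Require Import Defs.
From Stdlib Require Import Reals Lra Lia Classical FunctionalExtensionality PropExtensionality ClassicalEpsilon Cantor List.
Open Scope R_scope.

Lemma set_ext {X} (A B : set X) : (forall x, A x <-> B x) -> A = B.
Proof. intros H; apply functional_extensionality; intros x; apply propositional_extensionality; auto. Qed.

Section SA.
Variables (X : Type) (G : set (set X)).
Hypothesis HG : sigma_algebra G.

Lemma sa_T : G setT. Proof. apply HG. Qed.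
Lemma sa_C A : G A -> G (fun x => ~ A x). Proof. apply HG. Qed.
Lemma sa_U (A : nat -> set X) : (forall n, G (A n)) -> G (fun x => exists n, A n x).
Proof. apply HG. Qed.
Lemma sa_0 : G (fun _ => False).
Proof. replace (fun _ : X => False) with (fun x => ~ (@setT X) x). apply sa_C, sa_T.
  apply set_ext; unfold setT; tauto. Qed.
Lemma sa_I (A : nat -> set X) : (forall n, G (A n)) -> G (fun x => forall n, A n x).
Proof. intros H. replace (fun x => forall n, A n x) with (fun x => ~ exists n, ~ A n x).
  apply sa_C, sa_U; intros; apply sa_C, H.
  apply set_ext; intros x; split; intros H1.
  - intros n; apply NNPP; intros H2; apply H1; eauto.
  - intros [n Hn]; auto. Qed.
Lemma sa_U2 A B : G A -> G B -> G (fun x => A x \/ B x).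
Proof. intros HA HB. replace (fun x => A x \/ B x) with (fun x => exists n, (match n with O => A | _ => B end) x).
  apply sa_U; intros [|n]; auto.
  apply set_ext; intros x; split. intros [[|n] H]; auto. intros [H|H]; [exists O|exists (S O)]; auto. Qed.
Lemma sa_I2 A B : G A -> G B -> G (fun x => A x /\ B x).
Proof. intros HA HB. replace (fun x => A x /\ B x) with (fun x => forall n, (match n with O => A | _ => B end) x).
  apply sa_I; intros [|n]; auto.
  apply set_ext; intros x; split. intros H; split; [apply (H O)|apply (H (S O))]. intros [H1 H2] [|n]; auto. Qed.
Lemma sa_D A B : G A -> G B -> G (fun x => A x /\ ~ B x).
Proof. intros; apply sa_I2; auto; apply sa_C; auto. Qed.
End SA.

Section Prob.
Variables (Om : Type) (F : set (set Om)) (P : set Om -> R).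
Hypothesis HP : is_probability F P.

Lemma F_sa : sigma_algebra F. Proof. apply HP. Qed.
Lemma P_ge0 A : F A -> 0 <= P A. Proof. apply HP. Qed.

Lemma P_0 : P (fun _ => False) = 0.
Proof.
  destruct HP as [Hs [H0 [H1 H2]]].
  assert (Hsum := H2 (fun _ => fun _ => False) (fun _ => sa_0 _ _ Hs) (fun m n _ x a b => a)).
  cbv beta in Hsum.
  replace (fun x : Om => exists _ : nat, False) with (fun _ : Om => False) in Hsum
    by (apply set_ext; firstorder).
  set (p := P (fun _ => False)) in *.
  assert (Hp : 0 <= p) by (apply H0, sa_0, Hs).
  destruct (Rle_lt_or_eq_dec _ _ Hp) as [Hlt|]; [|auto].
  assert (Hp2 : p/2 > 0) by lra. destruct (Hsum (p/2) Hp2) as [N HN].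
  assert (A1 := HN N (le_n _)). assert (A2 := HN (S N) (le_S _ _ (le_n _))).
  simpl in A2. unfold R_dist in *. 
  apply Rabs_def2 in A1; apply Rabs_def2 in A2. lra.
Qed.

Lemma P_add A B : F A -> F B -> (forall x, A x -> B x -> False) ->
  P (fun x => A x \/ B x) = P A + P B.
Proof.
  intros HA HB Hd. destruct HP as [Hs [H0 [H1 H2]]].
  set (f := fun n => match n with O => A | S O => B | _ => fun _ : Om => False end).
  assert (Hf : forall n, F (f n)) by (intros [|[|n]]; simpl; auto; apply sa_0; auto).
  assert (Hdj : forall m n, m <> n -> forall x, f m x -> f n x -> False).
  { intros [|[|m]] [|[|n]] Hmn x; simpl; try tauto; try lia; eauto. }
  assert (Hsum := H2 f Hf Hdj).
  replace (fun x : Om => exists n, f n x) with (fun x => A x \/ B x) in Hsum.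
  2:{ apply set_ext; intros x; split. intros [H|H]; [exists O|exists (S O)]; auto.
      intros [[|[|n]] H]; simpl in H; tauto. }
  apply (uniqueness_sum _ _ _ Hsum).
  intros eps Heps. exists 1%nat. intros n Hn.
  assert (forall k, sum_f_R0 (fun n => P (f n)) (S k) = P A + P B).
  { induction k. simpl. ring. simpl in *. rewrite IHk. rewrite P_0. ring. }
  destruct n. lia. rewrite H. unfold R_dist. rewrite Rminus_diag, Rabs_R0. auto.
Qed.

Lemma P_split A B : F A -> F B -> P A = P (fun x => A x /\ B x) + P (fun x => A x /\ ~ B x).
Proof.
  intros HA HB. rewrite <- P_add.
  - f_equal; apply set_ext; intros x; tauto.
  - apply sa_I2; auto; apply F_sa.
  - apply sa_D; auto; apply F_sa.
  - tauto.
Qed.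

Lemma P_mono A B : F A -> F B -> (forall x, A x -> B x) -> P A <= P B.
Proof.
  intros HA HB Hs. rewrite (P_split B A HB HA).
  replace (fun x => B x /\ A x) with A by (apply set_ext; firstorder).
  assert (0 <= P (fun x => B x /\ ~ A x)) by (apply P_ge0, sa_D; auto; apply F_sa). lra.
Qed.
End Prob.

Section Prob2.
Variables (Om : Type) (F : set (set Om)) (P : set Om -> R).
Hypothesis HP : is_probability F P.

Lemma lim_le (a : nat -> R) l C : infinite_sum a l -> (forall n, sum_f_R0 a n <= C) -> l <= C.
Proof.
  intros Hs HC. destruct (Rle_or_lt l C) as [|Hlt]; auto.
  destruct (Hs (l - C)) as [N HN]; [lra|].
  specialize (HN N (le_n _)). specialize (HC N). unfold R_dist in HN.
  apply Rabs_def2 in HN. lra.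
Qed.

Lemma P_subadd (B : nat -> set Om) (c : nat -> R) C : (forall n, F (B n)) ->
  (forall n, P (B n) <= c n) -> (forall n, sum_f_R0 c n <= C) ->
  P (fun x => exists n, B n x) <= C.
Proof.
  intros HB Hc HC. assert (Hs := F_sa _ _ _ HP).
  set (D := fun n x => B n x /\ forall i, (i < n)%nat -> ~ B i x).
  assert (HD : forall n, F (D n)).
  { intros n. apply sa_I2; auto. apply sa_I; auto. intros i.
    destruct (Nat.lt_ge_cases i n) as [Hi|Hi].
    - replace (fun x => (i < n)%nat -> ~ B i x) with (fun x => ~ B i x).
      apply sa_C; auto. apply set_ext; intros x; tauto.
    - replace (fun x => (i < n)%nat -> ~ B i x) with (@setT Om).
      apply Hs. apply set_ext; intros x; unfold setT; split; auto; intros; lia. }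
  assert (Hdj : forall m n, m <> n -> forall x, D m x -> D n x -> False).
  { intros m n Hmn x [Hm Hm'] [Hn Hn']. destruct (Nat.lt_gt_cases m n) as [[H|H] _]; auto.
    - eapply Hn'; eauto. - eapply Hm'; eauto. }
  assert (Hsum := proj2 (proj2 (proj2 HP)) D HD Hdj).
  replace (fun x => exists n, D n x) with (fun x => exists n, B n x) in Hsum.
  2:{ apply set_ext; intros x; split.
      - intros [n Hn]. revert Hn. induction n as [n IH] using (well_founded_induction Wf_nat.lt_wf).
        intros Hn. destruct (classic (forall i, (i < n)%nat -> ~ B i x)) as [H|H].
        + exists n; split; auto.
        + apply not_all_ex_not in H. destruct H as [i Hi].
          apply imply_to_and in Hi. destruct Hi as [Hi Hi']. apply NNPP in Hi'. eauto.
      - intros [n [Hn _]]; eauto. }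
  apply (lim_le _ _ _ Hsum). intros n. eapply Rle_trans; [|apply (HC n)].
  apply sum_Rle. intros i _. eapply Rle_trans; [|apply Hc].
  apply P_mono with F; auto. intros x [H _]; auto.
Qed.

Lemma P_null_union (B : nat -> set Om) : (forall n, F (B n)) -> (forall n, P (B n) = 0) ->
  P (fun x => exists n, B n x) = 0.
Proof.
  intros HB H0. apply Rle_antisym.
  - apply (P_subadd B (fun _ => 0)); auto. intros n; rewrite H0; lra.
    intros n; rewrite sum_cte; lra.
  - apply P_ge0 with F; auto. apply sa_U; auto. apply F_sa with P; auto.
Qed.

Lemma P_cont_down (B : nat -> set Om) : (forall n, F (B n)) ->
  (forall n x, B (S n) x -> B n x) -> (forall x, ~ forall n, B n x) ->
  forall eps, eps > 0 -> exists M, forall m, (m >= M)%nat -> P (B m) < eps.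
Proof.
  intros HB Hdec Hemp eps Heps. assert (Hs := F_sa _ _ _ HP).
  assert (Hmono : forall m n x, (m <= n)%nat -> B n x -> B m x).
  { intros m n x Hmn. induction Hmn; auto. }
  set (D := fun n x => B n x /\ ~ B (S n) x).
  assert (HD : forall n, F (D n)) by (intros; apply sa_D; auto).
  assert (Hdj : forall m n, m <> n -> forall x, D m x -> D n x -> False).
  { intros m n Hmn x [Hm Hm'] [Hn Hn']. destruct (Nat.lt_gt_cases m n) as [[H|H] _]; auto.
    - apply Hm'. eapply Hmono; eauto.
    - apply Hn'. eapply Hmono; eauto. }
  assert (Hsum := proj2 (proj2 (proj2 HP)) D HD Hdj).
  replace (fun x => exists n, D n x) with (B O) in Hsum.
  2:{ apply set_ext; intros x; split.
      - intros H0. destruct (not_all_ex_not _ _ (Hemp x)) as [n Hn].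
        induction n. contradiction.
        destruct (classic (B n x)) as [H|H]. exists n; split; auto. auto.
      - intros [n [Hn _]]. apply (Hmono O n); [lia|auto]. }
  assert (Hpart : forall n, sum_f_R0 (fun n => P (D n)) n = P (B O) - P (B (S n))).
  { assert (Hsp : forall n, P (B n) = P (B (S n)) + P (D n)).
    { intros n. rewrite (P_split _ _ _ HP (B n) (B (S n))); auto.
      f_equal. f_equal. apply set_ext; intros x; split; [tauto|]. intros; split; auto. }
    induction n; simpl. rewrite (Hsp O). ring. rewrite IHn, (Hsp (S n)). ring. }
  destruct (Hsum eps Heps) as [N HN]. exists (S N). intros m Hm.
  destruct m as [|n]. lia. specialize (HN n ltac:(lia)). rewrite Hpart in HN.
  unfold R_dist in HN. apply Rabs_def2 in HN. lra.
Qed.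
End Prob2.

Lemma my_choice {A B : Type} (Rl : A -> B -> Prop) : (forall a, exists b, Rl a b) -> exists f, forall a, Rl a (f a).
Proof. intros H. exists (fun a => proj1_sig (constructive_indefinite_description _ (H a))).
  intros a; exact (proj2_sig (constructive_indefinite_description _ (H a))). Qed.

Lemma sigma_U {X} (C : set (set X)) (A : nat -> set X) :
  (forall n, fam_sigma C (A n)) -> fam_sigma C (fun x => exists n, A n x).
Proof.
  intros H. destruct (my_choice _ H) as [f Hf].
  exists (fun k => f (fst (Cantor.of_nat k)) (snd (Cantor.of_nat k))). split.
  - intros k; apply Hf.
  - intros x; split.
    + intros [n Hn]. apply (proj2 (Hf n)) in Hn. destruct Hn as [m Hm].
      exists (Cantor.to_nat (n, m)). rewrite Cantor.cancel_of_to. auto.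
    + intros [k Hk]. exists (fst (Cantor.of_nat k)). apply (proj2 (Hf _)). eauto.
Qed.

Lemma sigma_I {X} (C : set (set X)) (HC : forall A B, C A -> C B -> C (setI A B)) A B :
  fam_sigma C A -> fam_sigma C B -> fam_sigma C (fun x => A x /\ B x).
Proof.
  intros [f [Hf HfA]] [g [Hg HgB]].
  exists (fun k => setI (f (fst (Cantor.of_nat k))) (g (snd (Cantor.of_nat k)))). split.
  - intros k; apply HC; auto.
  - intros x; split.
    + intros [Ha Hb]. apply HfA in Ha; apply HgB in Hb. destruct Ha as [n Hn]; destruct Hb as [m Hm].
      exists (Cantor.to_nat (n, m)). rewrite Cantor.cancel_of_to. split; auto.
    + intros [k [H1 H2]]. split; [apply HfA|apply HgB]; eauto.
Qed.

Lemma sigma_of {X} (C : set (set X)) A : C A -> fam_sigma C A.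
Proof. intros H; exists (fun _ => A); split; auto. intros x; split; [intros; exists O|intros [_ ?]]; auto. Qed.

Lemma delta_of {X} (C : set (set X)) A : C A -> fam_delta C A.
Proof. intros H; exists (fun _ => A); split; auto. intros x; split; [intros; auto|intros H1; apply (H1 O)]. Qed.

Lemma compl_KL {X} (E : set (set X)) K :
  fam_sigma (fam_int E) K -> fam_delta (fam_ext E) (fun x => ~ K x).
Proof.
  intros [f [Hf HK]]. destruct (my_choice _ Hf) as [g Hg].
  exists (fun n x => exists m, g n m x). split.
  - intros n. exists (g n). split. apply Hg. tauto.
  - intros x; split.
    + intros H n. apply NNPP; intros H1. apply H, HK. exists n. apply (proj2 (Hg n)).
      intros m Hm; apply H1; eauto.
    + intros H H1. apply HK in H1. destruct H1 as [n Hn]. rewrite (proj2 (Hg n)) in Hn.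
      destruct (H n) as [m Hm]. eapply Hn; eauto.
Qed.

Lemma compl_LK {X} (E : set (set X)) L :
  fam_delta (fam_ext E) L -> fam_sigma (fam_int E) (fun x => ~ L x).
Proof.
  intros [f [Hf HL]]. destruct (my_choice _ Hf) as [g Hg].
  exists (fun n x => forall m, ~ g n m x). split.
  - intros n. exists (g n). split. apply Hg. tauto.
  - intros x; split.
    + intros H. apply NNPP; intros H1. apply H, HL. intros n. apply (proj2 (Hg n)).
      apply NNPP; intros H2. apply H1. exists n. intros m Hm. apply H2; eauto.
    + intros [n Hn] H. rewrite HL in H. specialize (H n). rewrite (proj2 (Hg n)) in H. destruct H as [m Hm]. eapply Hn; eauto.
Qed.

Section Gen.
Variables (X : Type) (G C : set (set X)).
Hypothesis HG : sigma_algebra G.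
Hypothesis HC : forall A, C A -> G A.
Lemma sigma_in A : fam_sigma C A -> G A.
Proof. intros [f [Hf HA]]. replace A with (fun x => exists n, f n x). apply sa_U; auto.
  apply set_ext; intros; rewrite HA; tauto. Qed.
Lemma delta_in A : fam_delta C A -> G A.
Proof. intros [f [Hf HA]]. replace A with (fun x => forall n, f n x). apply sa_I; auto.
  apply set_ext; intros; rewrite HA; tauto. Qed.
Lemma int_in A : fam_int C A -> G A.
Proof. intros [f [Hf HA]]. replace A with (fun x => forall n, ~ f n x). apply sa_I; auto.
  intros; apply sa_C; auto. apply set_ext; intros; rewrite HA; tauto. Qed.
End Gen.

Lemma card_ge_0 {X} (D : set X) : card_ge D O.
Proof. exists nil; simpl; repeat split; auto. constructor. intros _ []. Qed.

Lemma Ncard_ne {X} (D : set X) : (exists y, D y) <-> exists k, Ncard D k /\ k <> Some O.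
Proof.
  split.
  - intros [y Hy]. assert (H1 : card_ge D 1).
    { exists (cons y nil). repeat split. constructor. intros []. constructor. simpl; auto.
      intros x [<-|[]]; auto. }
    destruct (classic (forall n, card_ge D n)) as [H|H].
    + exists None; split; [exact H|discriminate].
    + apply not_all_ex_not in H; destruct H as [n Hn].
      induction n. exfalso; apply Hn, card_ge_0.
      destruct (classic (card_ge D n)) as [H|H]; auto.
      exists (Some n); split. split; auto. intros E; inversion E; subst; contradiction.
  - intros [[n|] [Hk Hne]].
    + destruct Hk as [[l [_ [Hl Hin]]] _]. destruct l as [|y l]. simpl in Hl; subst; congruence.
      exists y; apply Hin; simpl; auto.
    + destruct (Hk 1%nat) as [[|y l] [_ [Hl Hin]]]. discriminate. exists y; apply Hin; simpl; auto.
Qed.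

Lemma hit_meas {Om X} (F : set (set Om)) (SS : set (set X)) (pi : Om -> CS X) D :
  is_cr_set F SS pi -> SS D -> F (fun w => exists x, proj1_sig (pi w) x /\ D x).
Proof.
  intros Hpi HD.
  set (B := fun M : CS X => exists k, Ncard (setI D (proj1_sig M)) k /\ k <> Some O).
  assert (HB : CS_alg SS B).
  { intros G HG Hgen. apply Hgen. exists D; split; auto. exists (fun k => k <> Some O). tauto. }
  replace (fun w => exists x, proj1_sig (pi w) x /\ D x) with (fun w => B (pi w)).
  apply Hpi, HB. apply set_ext; intros w. unfold B. rewrite <- Ncard_ne. unfold setI. firstorder.
Qed.

Lemma geo_sum e N : sum_f_R0 (fun n => (/2)^(S n) * e) N = e * (1 - (/2)^(S N)).
Proof. induction N. simpl. field. rewrite tech5, IHN. simpl. field. Qed.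

Lemma geo_le e N : 0 <= e -> sum_f_R0 (fun n => (/2)^(S n) * e) N <= e.
Proof. intros He. rewrite geo_sum. assert (0 < (/2)^(S N)) by (apply pow_lt; lra). nra. Qed.

Lemma zero_lemma x k : 0 <= x -> (forall j, (j >= k)%nat -> x <= / INR (S j)) -> x = 0.
Proof.
  intros Hx H. destruct (Rle_lt_or_eq_dec _ _ Hx) as [Hlt|]; auto.
  destruct (INR_unbounded (/ x)) as [n Hn].
  specialize (H (Nat.max n k) ltac:(lia)).
  assert (Hle : INR n <= INR (Nat.max n k)) by (apply le_INR; lia).
  assert (HS : INR (Nat.max n k) < INR (S (Nat.max n k))) by (apply lt_INR; lia).
  assert (Hpos : 0 < INR (S (Nat.max n k))) by (apply lt_0_INR; lia).
  assert (x * INR (S (Nat.max n k)) <= 1).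
  { apply (Rmult_le_compat_r (INR (S (Nat.max n k)))) in H; [|lra].
    rewrite Rinv_l in H; lra. }
  assert (x * (/ x) = 1) by (field; lra).
  assert (x * (/ x) < x * INR (S (Nat.max n k))) by (apply Rmult_lt_compat_l; lra). lra.
Qed.

Lemma fin_lemma {X} (D : nat -> set X) (l : list X) :
  (forall m x, D (S m) x -> D m x) ->
  (forall x, In x l -> ~ forall m, D m x) -> exists M, forall x, In x l -> ~ D M x.
Proof.
  intros Hdec. assert (Hmono : forall m n x, (m <= n)%nat -> D n x -> D m x).
  { intros m n x Hmn. induction Hmn; auto. }
  induction l as [|a l IH]; intros H.
  - exists O; intros x [].
  - destruct IH as [M1 HM1]. intros x Hx; apply H; simpl; auto.
    destruct (not_all_ex_not _ _ (H a (or_introl eq_refl))) as [Ma HMa].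
    exists (Nat.max M1 Ma). intros x [<-|Hx] HD.
    + apply HMa. apply (Hmono Ma (Nat.max M1 Ma) a); auto; lia.
    + apply (HM1 x Hx). apply (Hmono _ (Nat.max M1 Ma) _); auto; lia.
Qed.

Lemma sa_setD {X} (G : set (set X)) A B : sigma_algebra G -> G A -> G B -> G (setD A B).
Proof. intros; unfold setD; apply sa_D; auto. Qed.

Section Main.
Variables (Om : Type) (F : set (set Om)) (P : set Om -> R) (St : Type) (SS : set (set St))
  (E : set (set St)) (pik : nat -> Om -> CS St).
Hypothesis HP : is_probability F P.
Hypothesis HSS : sigma_algebra SS.
Hypothesis HEI : forall A B, E A -> E B -> E (setI A B).
Hypothesis HSE : forall A, SS A <-> sigma_gen E A.
Hypothesis HE0 : E (fun _ => False).
Hypothesis HEK : forall A, E A -> fam_sigma (fam_int E) A.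
Hypothesis Hpik : forall k, is_finite_cr_set F SS (pik k).

Definition hit (k : nat) (D : set St) : set Om := fun w => exists x, proj1_sig (pik k w) x /\ D x.
Definition null (D : set St) := forall k, P (hit k D) = 0.

Lemma HF : sigma_algebra F. Proof. apply HP. Qed.
Lemma E_SS A : E A -> SS A.
Proof. intros HA. apply HSE. intros G HG H; auto. Qed.
Lemma Es_SS A : fam_sigma E A -> SS A.
Proof. apply sigma_in; auto. apply E_SS. Qed.
Lemma Ks_SS A : fam_sigma (fam_int E) A -> SS A.
Proof. apply sigma_in; auto. apply int_in; auto. apply E_SS. Qed.
Lemma Ls_SS A : fam_delta (fam_ext E) A -> SS A.
Proof. apply delta_in; auto. apply Es_SS. Qed.
Lemma hit_F k D : SS D -> F (hit k D).
Proof. intros; apply (hit_meas F SS); auto. apply Hpik. Qed.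

Lemma null_mono D D' : SS D -> SS D' -> subset D' D -> null D -> null D'.
Proof.
  intros HD HD' Hs Hn k. apply Rle_antisym.
  - rewrite <- (Hn k). apply (P_mono _ F); auto using hit_F. intros w [x [H1 H2]]. exists x; auto.
  - apply (P_ge0 _ F P); auto using hit_F.
Qed.

Lemma null_empty D : (forall x, ~ D x) -> null D.
Proof.
  intros H k. replace (hit k D) with (fun _ : Om => False). apply (P_0 _ F); auto.
  apply set_ext; intros w; unfold hit; firstorder.
Qed.

Lemma null_U (D : nat -> set St) : (forall n, SS (D n)) -> (forall n, null (D n)) ->
  null (fun x => exists n, D n x).
Proof.
  intros HD Hn k. replace (hit k (fun x => exists n, D n x)) with (fun w => exists n, hit k (D n) w).
  apply (P_null_union _ F); auto using hit_F. intros n; apply Hn.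
  apply set_ext; intros w; unfold hit; firstorder.
Qed.

Definition Gc (A : set St) := SS A /\ exists K L, fam_sigma (fam_int E) K /\ fam_delta (fam_ext E) L /\
  subset K A /\ subset A L /\ null (setD L K).

Lemma G_E A : E A -> Gc A.
Proof.
  intros HA. split. apply E_SS; auto. exists A, A. repeat split; auto.
  apply delta_of, sigma_of; auto. intros x H; auto. intros x H; auto.
  apply null_empty. unfold setD; tauto.
Qed.

Lemma G_C A : Gc A -> Gc (fun x => ~ A x).
Proof.
  intros [HA [K [L [HK [HL [HKA [HAL Hn]]]]]]]. split. apply sa_C; auto.
  exists (fun x => ~ L x), (fun x => ~ K x). repeat split.
  apply compl_LK; auto. apply compl_KL; auto.
  intros x H1 H2; apply H1, HAL; auto. intros x H1 H2; apply H1, HKA; auto.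
  replace (setD (fun x => ~ K x) (fun x => ~ L x)) with (setD L K); auto.
  apply set_ext; intros x; unfold setD; split; [tauto|]. intros [H1 H2]; split; auto. apply NNPP; auto.
Qed.

Lemma G_U (A : nat -> set St) : (forall n, Gc (A n)) -> Gc (fun x => exists n, A n x).
Proof.
  intros HGA.
  assert (H' : forall n, exists p : set St * set St, fam_sigma (fam_int E) (fst p) /\
    fam_delta (fam_ext E) (snd p) /\ subset (fst p) (A n) /\ subset (A n) (snd p) /\ null (setD (snd p) (fst p))).
  { intros n. destruct (HGA n) as [_ [K [L HH]]]. exists (K, L); exact HH. }
  destruct (my_choice _ H') as [p Hp]. clear H'.
  set (Kn := fun n => fst (p n)). set (Ln := fun n => snd (p n)).
  assert (HKn : forall n, fam_sigma (fam_int E) (Kn n)) by (intros n; apply Hp).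
  assert (HLn : forall n, fam_delta (fam_ext E) (Ln n)) by (intros n; apply Hp).
  assert (HKA : forall n, subset (Kn n) (A n)) by (intros n; apply Hp).
  assert (HAL : forall n, subset (A n) (Ln n)) by (intros n; apply Hp).
  assert (Hnull : forall n, null (setD (Ln n) (Kn n))) by (intros n; apply Hp).
  destruct (my_choice _ HLn) as [V HV].
  set (U := fun n m x => forall i, (i <= m)%nat -> V n i x).
  assert (HU : forall n m, fam_sigma E (U n m)).
  { intros n m. induction m.
    - replace (U n O) with (V n O). apply (proj1 (HV n)).
      apply set_ext; intros x; unfold U; split. intros H i Hi. replace i with O by lia; auto.
      intros H; apply H; auto.
    - replace (U n (S m)) with (fun x => U n m x /\ V n (S m) x).
      apply sigma_I; auto. apply (proj1 (HV n)).
      apply set_ext; intros x; unfold U; split.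
      + intros [H1 H2] i Hi. destruct (Nat.eq_dec i (S m)) as [->|]; auto. apply H1; lia.
      + intros H; split; auto. }
  assert (HUdec : forall n m x, U n (S m) x -> U n m x) by (unfold U; intros; auto).
  assert (HUL : forall n x, Ln n x <-> forall m, U n m x).
  { intros n x. rewrite (proj2 (HV n)). unfold U; split; auto. intros H m; apply (H m m); auto. }
  assert (SSL : forall n, SS (Ln n)) by (intros; apply Ls_SS; auto).
  assert (SSK : forall n, SS (Kn n)) by (intros; apply Ks_SS; auto).
  assert (SSU : forall n m, SS (U n m)) by (intros; apply Es_SS; auto).
  assert (SSD : forall n m, SS (setD (U n m) (Ln n))) by (intros; apply sa_setD; auto; auto).
  assert (Hev : forall n k eps, eps > 0 -> exists M, forall m, (m >= M)%nat ->
    P (hit k (setD (U n m) (Ln n))) < eps).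
  { intros n k eps Heps. apply (P_cont_down _ F); auto.
    - intros m; apply hit_F; auto.
    - intros m w [x [H1 [H2 H3]]]. exists x; repeat split; auto.
    - intros w Hall. destruct (proj2 (Hpik k) w) as [l Hl].
      destruct (fin_lemma (fun m => setD (U n m) (Ln n)) l) as [M HM].
      + intros m x [H1 H2]; split; auto.
      + intros x _ Hx. apply (proj2 (Hx O)). apply HUL. intros m; apply (Hx m).
      + destruct (Hall M) as [x [H1 H2]]. apply (HM x); auto. apply Hl; auto. }
  assert (Hjm : forall nj : nat * nat, exists m, forall k, (k <= snd nj)%nat ->
     P (hit k (setD (U (fst nj) m) (Ln (fst nj)))) < (/2)^(S (fst nj)) * / INR (S (snd nj))).
  { intros [n j]. simpl.
    assert (Heps : (/2)^(S n) * / INR (S j) > 0).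
    { apply Rmult_lt_0_compat. apply pow_lt; lra. apply Rinv_0_lt_compat, lt_0_INR; lia. }
    assert (Haux : forall J, exists M, forall m, (m >= M)%nat -> forall k, (k <= J)%nat ->
       P (hit k (setD (U n m) (Ln n))) < (/2)^(S n) * / INR (S j)).
    { induction J.
      - destruct (Hev n O _ Heps) as [M HM]. exists M. intros m Hm k Hk.
        replace k with O by lia. auto.
      - destruct IHJ as [M1 HM1]. destruct (Hev n (S J) _ Heps) as [M2 HM2].
        exists (Nat.max M1 M2). intros m Hm k Hk.
        destruct (Nat.eq_dec k (S J)) as [->|]. apply HM2; lia. apply HM1; lia. }
    destruct (Haux j) as [M HM]. exists M. apply HM. lia. }
  destruct (my_choice _ Hjm) as [mm Hmm].
  set (W := fun j x => exists n, U n (mm (n, j)) x).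
  set (L := fun x => forall j, W j x).
  set (K := fun x => exists n, Kn n x).
  assert (HLs : fam_delta (fam_ext E) L).
  { exists W. split. intros j. apply sigma_U. intros n; apply HU. unfold L; tauto. }
  assert (HKs : fam_sigma (fam_int E) K) by (apply sigma_U; auto).
  split. apply sa_U; auto. intros n; apply HGA.
  exists K, L. repeat split; auto.
  - intros x [n Hn]. exists n. apply HKA; auto.
  - intros x [n Hn] j. exists n. apply (HUL n x). apply HAL; auto.
  - set (D0 := setD L (fun x => exists n, Ln n x)).
    set (D := fun i => match i with O => D0 | S n => setD (Ln n) (Kn n) end).
    assert (SSD0 : SS D0). { apply sa_setD; auto; auto. apply Ls_SS; auto. apply sa_U; auto. }
    assert (SSDi : forall i, SS (D i)). { intros [|n]; simpl; auto. apply sa_setD; auto; auto. }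
    apply (null_mono (fun x => exists i, D i x)).
    + apply sa_U; auto.
    + apply sa_setD; auto. auto. apply Ls_SS; auto. apply Ks_SS; auto.
    + intros x [HLx HKx]. destruct (classic (exists n, Ln n x)) as [[n Hn]|Hn].
      * exists (S n). simpl. split; auto. intros H; apply HKx; exists n; auto.
      * exists O. simpl. split; auto.
    + apply null_U; auto. intros [|n]; simpl; auto.
      intros k. apply (zero_lemma _ k). apply (P_ge0 _ F P); auto using hit_F.
      intros j Hj.
      apply Rle_trans with (P (fun w => exists n, hit k (setD (U n (mm (n, j))) (Ln n)) w)).
      * apply (P_mono _ F); auto using hit_F.
        -- apply sa_U; auto using HF. intros n; apply hit_F; auto.
        -- intros w [x [Hx [HLx HnL]]]. destruct (HLx j) as [n Hn]. exists n, x.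
           repeat split; auto. intros H; apply HnL; eauto.
      * apply (P_subadd _ F P HP _ (fun n => (/2)^(S n) * / INR (S j))).
        -- intros n; apply hit_F; auto.
        -- intros n. left. apply (Hmm (n, j)). simpl; lia.
        -- intros N. apply geo_le. left. apply Rinv_0_lt_compat, lt_0_INR; lia.
Qed.

Lemma G_sa : sigma_algebra Gc.
Proof.
  split; [|split].
  - replace (@setT St) with (fun x => ~ (fun _ : St => False) x). apply G_C, G_E; auto.
    apply set_ext; unfold setT; tauto.
  - apply G_C.
  - apply G_U.
Qed.

Variable pi : Om -> CS St.
Hypothesis Hpi_eq : forall w x, proj1_sig (pi w) x <-> exists k, proj1_sig (pik k w) x.

Lemma final_in A : SS A -> exists K L, fam_sigma (fam_int E) K /\ fam_delta (fam_ext E) L /\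
      subset K A /\ subset A L /\ hitting P pi (setD L K) = 0.
Proof.
  intros HA. assert (HG : Gc A) by (apply (proj1 (HSE A) HA); [apply G_sa|apply G_E]).
  destruct HG as [_ [K [L [HK [HL [HKA [HAL Hn]]]]]]].
  exists K, L. repeat split; auto.
  unfold hitting. replace (fun w => exists x, proj1_sig (pi w) x /\ setD L K x)
    with (fun w => exists k, hit k (setD L K) w).
  apply (P_null_union _ F); auto. intros k; apply hit_F. apply sa_setD; auto; auto. apply Ls_SS; auto. apply Ks_SS; auto.
  apply set_ext; intros w; unfold hit; split.
  - intros [k [x [H1 H2]]]. exists x; split; auto. apply Hpi_eq; eauto.
  - intros [x [H1 H2]]. apply Hpi_eq in H1. destruct H1 as [k Hk]. eauto.
Qed.
End Main.

Theorem lemma5p6 (Om : Type) (F : set (set Om)) (P : set Om -> R)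
  (S : Type) (SS : set (set S)) (E : set (set S)) (pi : Om -> CS S) :
  is_probability F P ->
  sigma_algebra SS ->
  (forall A B, E A -> E B -> E (setI A B)) ->
  (forall A, SS A <-> sigma_gen E A) ->
  E (fun _ => False) ->
  (forall A, E A -> fam_sigma (fam_int E) A) ->
  is_cr_set F SS pi ->
  constructive F SS pi ->
  forall A, SS A ->
    exists K L, fam_sigma (fam_int E) K /\ fam_delta (fam_ext E) L /\
      subset K A /\ subset A L /\ hitting P pi (setD L K) = 0.
Proof.
  intros HP HSS HEI HSE HE0 HEK Hpi [pik [Hpik Hpi_eq]] A HA.
  eapply final_in; eauto.
Qed.
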